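(* Let $p,b\in\mathbb{R}^K$ with $p_1\ge p_2\ge\dots\ge p_K\ge0$, $\sum_{i=1}^Kp_i=1$, and $b_i\ge0$ for all $i$. Then $$\sum_{i=1}^Kp_ib_i^2-\Big[\sum_{i=1}^Kp_ib_i\Big]^2\ge p_1\sum_{j=2}^Kp_j\,[b_1-b_j]^2.$$ *)

(* Defs.v *)
From mathcomp Require Import all_boot all_order all_algebra.

(* Main.v *)
Require Import Defs.
From mathcomp Require Import all_boot all_order all_algebra.
From mathcomp Require Import ring lra.
Import Order.TTheory GRing.Theory Num.Theory.
Local Open Scope ring_scope.

(* Indices 1..K are 'I_K.+1 with index 1 = ord0; K >= 1 is forced by sum p = 1. *)
Theorem lemma9 (R : realFieldType) (K : nat) (p b : 'I_K.+1 -> R)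
  (hmono : forall i j : 'I_K.+1, (i <= j)%N -> p j <= p i)
  (hnn : forall i, 0 <= p i)
  (hsum : \sum_i p i = 1)
  (hb : forall i, 0 <= b i) :
  \sum_i p i * b i ^+ 2 - (\sum_i p i * b i) ^+ 2
    >= p ord0 * \sum_(j : 'I_K.+1 | j != ord0) p j * (b ord0 - b j) ^+ 2.
Proof.
set S2 := \sum_i p i * b i ^+ 2.
set m := \sum_i p i * b i.
set T := \sum_(j : 'I_K.+1 | j != ord0) p j * (b ord0 - b j) ^+ 2.
pose G i j := p i * p j * (b i - b j) ^+ 2.
have Gge0 i j : 0 <= G i j by apply: mulr_ge0; [apply: mulr_ge0 | apply: sqr_ge0].
have key : \sum_i \sum_j G i j = 2 * (S2 - m ^+ 2).
  have e1 i : \sum_j G i j = p i * b i ^+ 2 + S2 * p i - 2 * (p i * b i) * m.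
    transitivity (\sum_j (p i * b i ^+ 2 * p j + p j * b j ^+ 2 * p i
                          - 2 * (p i * b i) * (p j * b j))).
      by apply: eq_bigr => j _; rewrite /G; ring.
    rewrite sumrB big_split /= -mulr_sumr -mulr_suml -mulr_sumr hsum.
    by rewrite mulr1.
  rewrite (eq_bigr _ (fun i _ => e1 i)) sumrB big_split /= -mulr_sumr hsum.
  rewrite -/S2 -mulr_suml -mulr_sumr -/m; ring.
have low : 2 * (p ord0 * T) <= \sum_i \sum_j G i j.
  rewrite (bigD1 ord0) //= [X in _ <= X + _](bigD1 ord0) //= /G subrr expr0n /= mulr0 add0r.
  rewrite mulr2n mulrDl mul1r mulr_sumr; apply: lerD.
    by apply: ler_sum => j _; rewrite mulrA.
  apply: ler_sum => i Hi.
  rewrite (bigD1 ord0) //= -[X in X <= _]addr0 lerD //.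
    by rewrite mulrA [p ord0 * p i]mulrC -sqrrN opprB.
  by apply: sumr_ge0 => j _; apply: Gge0.
rewrite -/S2 -/m -/T; lra.
Qed.
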